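(* Let $M$ be a quasianalytic intersectable weight sequence. Then: (i) $n_k^{1/k}\to\infty$ for all $N\in\mathcal{L}(M)$, where $n_k=N_k/k!$. (ii) If $M$ has moderate growth, then for every $N\in\mathcal{L}(M)$ there exists $N'\in\mathcal{L}(M)$ such that $\mathrm{mg}(N',N)<\infty$.
   Context: A weight sequence is a sequence $M=(M_k)_{k\ge0}$ of positive reals with $M_k=\mu_1\cdots\mu_k$, $M_0=1$, where $(\mu_k)$ is positive and increasing with $\mu_0=1$, and $M_k^{1/k}\to\infty$. $M$ is non-quasianalytic if $\sum_{k\ge1}1/\mu_k<\infty$, quasianalytic otherwise; it has moderate growth if $\exists C>0\ \forall j,k: M_{j+k}\le C^{j+k}M_jM_k$. $\Lambda^{\{M\}}:=\{(c_k)\in\mathbb{C}^{\mathbb{N}}:\exists\rho>0,\ \sup_k|c_k|/(\rho^kM_k)<\infty\}$; $\mathcal{L}(M)$ is the set of all non-quasianalytic weight sequences $N$ with $N_k\ge M_k$ for all $k$ and $(N_k/k!)_k$ log-convex. A quasianalytic weight sequence $M$ is intersectable if $\Lambda^{\{M\}}=\bigcap_{N\in\mathcal{L}(M)}\Lambda^{\{N\}}$. $\mathrm{mg}(M,N):=\sup_{j,k\ge0,j+k\ge1}(M_{j+k}/(N_jN_k))^{1/(j+k)}\in(0,\infty]$. *)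

(* Defs.v *)
From Stdlib Require Import Reals Arith.
From Coquelicot Require Export Coquelicot.
Open Scope R_scope.

Definition weight_seq (M : nat -> R) : Prop :=
  exists mu : nat -> R,
    mu 0%nat = 1 /\
    (forall k, 0 < mu k) /\
    (forall k, mu k <= mu (S k)) /\
    M 0%nat = 1 /\
    (forall k, M (S k) = M k * mu (S k)) /\
    is_lim_seq (fun k => Rpower (M k) (/ INR k)) p_infty.

(* mu_{k+1} = M_{k+1} / M_k, so 1/mu_{k+1} = M_k / M_{k+1};
   non-quasianalytic: sum_{k>=1} 1/mu_k < oo (positive terms). *)
Definition nonquasianalytic (M : nat -> R) : Prop :=
  ex_series (fun k => M k / M (S k)).

Definition quasianalytic (M : nat -> R) : Prop := ~ nonquasianalytic M.

Definition moderate_growth (M : nat -> R) : Prop :=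
  exists C, 0 < C /\ forall j k : nat, M (j + k)%nat <= C ^ (j + k) * M j * M k.

Definition Lambda (M : nat -> R) (c : nat -> C) : Prop :=
  exists rho, 0 < rho /\ exists B, forall k, Cmod (c k) / (rho ^ k * M k) <= B.

Definition log_convex (a : nat -> R) : Prop :=
  forall k, a (S k) ^ 2 <= a k * a (S (S k)).

Definition in_LM (M N : nat -> R) : Prop :=
  weight_seq N /\ nonquasianalytic N /\ (forall k, M k <= N k) /\
  log_convex (fun k => N k / INR (Factorial.fact k)).

Definition intersectable (M : nat -> R) : Prop :=
  quasianalytic M /\
  forall c : nat -> C, Lambda M c <-> (forall N, in_LM M N -> Lambda N c).

Definition mg (M N : nat -> R) : Rbar :=
  Lub_Rbar (fun x => exists j k : nat, (1 <= j + k)%nat /\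
     x = Rpower (M (j + k)%nat / (N j * N k)) (/ INR (j + k))).

(* Main.v *)
Require Import Defs.
From Stdlib Require Import Reals Arith Lia Lra Psatz ZArith.
From Coquelicot Require Import Coquelicot.
Open Scope R_scope.

Lemma ws_pos N : weight_seq N -> forall k, 0 < N k.
Proof.
  intros [mu [H0 [Hp [Hi [HN0 [HS _]]]]]] k.
  induction k. rewrite HN0; lra. rewrite HS. apply Rmult_lt_0_compat; auto.
Qed.

Lemma nu_grows (nu : nat -> R) :
  (forall k, 0 < nu k) -> (forall k, nu k <= nu (S k)) ->
  ex_series (fun k => / nu (S k)) ->
  forall L, 0 < L -> exists K, forall j, (K <= j)%nat -> L * INR j <= nu j.
Proof.
  intros Hp Hi Hs L HL.
  assert (Hmono : forall p q, (p <= q)%nat -> nu p <= nu q).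
  { intros p q Hpq; induction Hpq. lra. specialize (Hi m); lra. }
  apply (@Cauchy_ex_series R_AbsRing R_CompleteNormedModule) in Hs.
  assert (He : 0 < / (2 * L)) by (apply Rinv_0_lt_compat; lra).
  destruct (Hs (mkposreal _ He)) as [K0 HK0]. simpl in HK0.
  exists (2 * K0 + 2)%nat. intros j Hj.
  destruct j as [|j']; [lia|].
  specialize (HK0 K0 j' (Nat.le_refl _) ltac:(lia)).
  set (c := / nu (S j')).
  assert (Hc : 0 < c) by (apply Rinv_0_lt_compat; auto).
  assert (Hlow : sum_n_m (fun _ => c) K0 j' <= sum_n_m (fun k => / nu (S k)) K0 j').
  { rewrite (sum_n_m_ext_loc (fun _ => c) (fun k => Rmin (/ nu (S k)) c)).
    - apply sum_n_m_le. intros k; apply Rmin_l.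
    - intros k Hk. rewrite Rmin_right; auto. unfold c.
      apply Rinv_le_contravar; auto. apply Hmono; lia. }
  rewrite sum_n_m_const in Hlow.
  assert (Habs : sum_n_m (fun k => / nu (S k)) K0 j' < / (2 * L)).
  { eapply Rle_lt_trans; [apply Rle_abs|]. exact HK0. }
  assert (Hcnt : INR (S j') <= 2 * INR (S j' - K0)).
  { replace 2 with (INR 2) by (simpl; lra). rewrite <- mult_INR. apply le_INR. lia. }
  assert (HT : INR (S j' - K0) * c < / (2 * L)) by lra.
  unfold c in HT.
  assert (Hn : 0 < nu (S j')) by auto.
  assert (HT2 : 2 * L * INR (S j' - K0) < nu (S j')).
  { apply (Rmult_lt_compat_r (nu (S j'))) in HT; auto.
    replace (INR (S j' - K0) * / nu (S j') * nu (S j')) with (INR (S j' - K0)) in HT by (field; lra).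
    apply (Rmult_lt_compat_l (2 * L)) in HT; [|lra].
    replace (2 * L * (/ (2 * L) * nu (S j'))) with (nu (S j')) in HT by (field; lra). lra. }
  nra.
Qed.

Lemma nat_arch x : exists n : nat, x <= INR n.
Proof.
  destruct (archimed x) as [H _].
  destruct (Z_le_gt_dec 0 (up x)) as [h|h].
  - exists (Z.to_nat (up x)). rewrite INR_IZR_INZ, Z2Nat.id by lia. lra.
  - exists 0%nat. simpl. apply Z.gt_lt in h. apply IZR_lt in h. lra.
Qed.

Lemma fact_S_R k : INR (fact (S k)) = INR (S k) * INR (fact k).
Proof. rewrite fact_simpl, mult_INR. reflexivity. Qed.

Lemma INR_fact_pos k : 0 < INR (fact k).
Proof. apply lt_0_INR, lt_O_fact. Qed.

Lemma part1 N : weight_seq N -> nonquasianalytic N ->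
  is_lim_seq (fun k => Rpower (N k / INR (fact k)) (/ INR k)) p_infty.
Proof.
  intros Hw Hq.
  pose proof (ws_pos N Hw) as HNp.
  destruct Hw as [mu [H0 [Hp [Hi [HN0 [HS _]]]]]].
  assert (Hs : ex_series (fun k => / mu (S k))).
  { eapply ex_series_ext; [|exact Hq]. intros k. simpl. rewrite HS.
    specialize (HNp k); specialize (Hp (S k)). field; lra. }
  set (n := fun k => N k / INR (fact k)).
  assert (Hnp : forall k, 0 < n k).
  { intros k; unfold n; apply Rdiv_lt_0_compat; auto; apply INR_fact_pos. }
  assert (HnS : forall k, n (S k) = n k * (mu (S k) / INR (S k))).
  { intros k; unfold n. rewrite HS, fact_S_R. pose proof (INR_fact_pos k).
    assert (0 < INR (S k)) by (apply lt_0_INR; lia). field; lra. }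
  apply is_lim_seq_p_infty_Reals. intros B.
  set (T := Rabs B + 2).
  set (A := ln T).
  assert (HA : 0 < A).
  { unfold A. rewrite <- ln_1. pose proof (Rabs_pos B). apply ln_increasing. lra. unfold T. lra. }
  set (L := exp (2 * A)).
  assert (HL : 0 < L) by apply exp_pos.
  destruct (nu_grows mu Hp Hi Hs L HL) as [K HK].
  assert (Hg : forall t, n K * L ^ t <= n (K + t)%nat).
  { induction t. simpl. rewrite Nat.add_0_r; lra.
    rewrite Nat.add_succ_r, HnS, <- tech_pow_Rmult.
    specialize (HK (S (K + t)) ltac:(lia)).
    assert (0 < INR (S (K + t))) by (apply lt_0_INR; lia).
    assert (L <= mu (S (K + t)) / INR (S (K + t))).
    { apply (Rmult_le_reg_r (INR (S (K + t)))); auto. field_simplify; lra. }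
    pose proof (Hnp (K + t)%nat). pose proof (pow_lt L t HL). pose proof (Hnp K).
    replace (n K * (L * L ^ t)) with (n K * L ^ t * L) by ring.
    apply Rmult_le_compat; try lra. apply Rmult_le_pos; lra. }
  set (c := ln (n K)).
  destruct (nat_arch (2 * INR K + Rabs c / A + 1)) as [k0 Hk0].
  exists (max k0 K). intros k Hk.
  assert (Hk0' : 2 * INR K + Rabs c / A + 1 <= INR k).
  { eapply Rle_trans; [exact Hk0|]. apply le_INR. lia. }
  assert (HkK : (K <= k)%nat) by lia.
  assert (Hkpos : 0 < INR k).
  { assert (0 <= Rabs c / A) by (apply Rdiv_le_0_compat; [apply Rabs_pos|lra]).
    pose proof (pos_INR K). lra. }
  specialize (Hg (k - K)%nat). replace (K + (k - K))%nat with k in Hg by lia.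
  assert (Hln : c + INR (k - K) * (2 * A) <= ln (n k)).
  { unfold c. rewrite <- (ln_exp (2 * A)). rewrite <- ln_pow by apply exp_pos.
    rewrite <- ln_mult; [|auto|apply pow_lt, exp_pos]. apply ln_le; [apply Rmult_lt_0_compat; [auto|apply pow_lt, exp_pos]|].
    fold L. lra. }
  rewrite minus_INR in Hln by lia.
  assert (HcA : - c <= A * (Rabs c / A)).
  { replace (A * (Rabs c / A)) with (Rabs c) by (field; lra).
    pose proof (Rabs_Ropp c). pose proof (Rle_abs (- c)). lra. }
  assert (Hmain : A * INR k <= ln (n k)).
  { pose proof (pos_INR K). nra. }
  unfold Rpower. fold (n k).
  apply Rlt_le_trans with (exp A).
  - unfold A. rewrite exp_ln by (unfold T; pose proof (Rabs_pos B); lra).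
    unfold T. pose proof (Rle_abs B). lra.
  - assert (HAk : A <= / INR k * ln (n k)).
    { apply (Rmult_le_reg_l (INR k)); auto. rewrite <- Rmult_assoc, Rinv_r by lra. lra. }
    destruct (Rle_lt_or_eq_dec _ _ HAk) as [h|h].
    + left; apply exp_increasing; exact h.
    + rewrite h; lra.
Qed.

Section LC.
Variable x : nat -> R.
Hypothesis xp : forall k, 0 < x k.
Hypothesis xlc : forall k, x (S k) ^ 2 <= x k * x (S (S k)).

Lemma LCmono p q : (p <= q)%nat -> x (S p) * x q <= x p * x (S q).
Proof.
  induction 1. lra.
  apply (Rmult_le_reg_l (x m)); [auto|].
  pose proof (xlc m). pose proof (xp p). pose proof (xp (S p)). pose proof (xp (S m)).
  apply Rle_trans with (x p * x (S m) * x (S m)).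
  - replace (x m * (x (S p) * x (S m))) with (x (S p) * x m * x (S m)) by ring.
    apply Rmult_le_compat_r; lra.
  - replace (x m * (x p * x (S (S m)))) with (x p * (x m * x (S (S m)))) by ring.
    rewrite Rmult_assoc. apply Rmult_le_compat_l; [lra|]. simpl in H0. lra.
Qed.

Lemma LCX t j b : (j <= b)%nat -> x (j + t) * x b <= x j * x (b + t).
Proof.
  intros Hjb. induction t.
  - rewrite !Nat.add_0_r; lra.
  - rewrite !Nat.add_succ_r.
    pose proof (LCmono (j + t) (b + t) ltac:(lia)) as Y.
    pose proof (xp (j + t)). pose proof (xp (b + t)). pose proof (xp b). pose proof (xp j).
    pose proof (xp (S (j + t))). pose proof (xp (S (b + t))).
    apply (Rmult_le_reg_l (x (j + t)%nat * x (b + t)%nat)); [nra|].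
    apply Rle_trans with ((x (S (j + t)) * x (b + t)%nat) * (x (j + t)%nat * x b)).
    + right; ring.
    + apply Rle_trans with ((x (j + t)%nat * x (S (b + t))) * (x j * x (b + t)%nat)).
      * apply Rmult_le_compat; try nra.
      * right; ring.
Qed.
End LC.

Lemma fact_mul_le a b : (fact a * fact b <= fact (a + b))%nat.
Proof.
  induction b. simpl. rewrite Nat.add_0_r. lia.
  rewrite Nat.add_succ_r, !fact_simpl.
  replace (fact a * (S b * fact b))%nat with (S b * (fact a * fact b))%nat by ring.
  apply Nat.mul_le_mono; lia.
Qed.

Lemma fact_binom_le n : forall j, (j <= n)%nat -> (fact n <= 2 ^ n * fact j * fact (n - j))%nat.
Proof.
  induction n; intros j Hj.
  - assert (j = 0%nat) by lia. subst. simpl. lia.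
  - destruct j as [|j'].
    + simpl (fact 0). rewrite Nat.sub_0_r. pose proof (Nat.pow_nonzero 2 (S n)). nia.
    + rewrite (fact_simpl n).
      replace (S n - S j')%nat with (n - j')%nat by lia.
      pose proof (IHn j' ltac:(lia)) as H1.
      rewrite fact_simpl.
      assert (H2 : ((n - j') * fact n <= 2 ^ n * fact (S j') * fact (n - j'))%nat).
      { destruct (Nat.eq_dec j' n) as [e|e].
        - subst. rewrite Nat.sub_diag. simpl. lia.
        - pose proof (IHn (S j') ltac:(lia)) as H3.
          replace (n - j')%nat with (S (n - S j')) by lia.
          rewrite (fact_simpl (n - S j')).
          rewrite fact_simpl in H3 |- *. nia. }
      rewrite fact_simpl in H2.
      assert (H4 : (S j' * fact n <= S j' * (2^n * fact j' * fact (n-j')))%nat) by (apply Nat.mul_le_mono_l; exact H1).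
      rewrite Nat.pow_succ_r'.
      replace (S n) with (S j' + (n - j'))%nat at 1 by lia.
      rewrite Nat.mul_add_distr_r.
      eapply Nat.le_trans. apply Nat.add_le_mono; [exact H4 | exact H2].
      apply Nat.eq_le_incl; ring.
Qed.

Lemma sum_n_mono (a : nat -> R) : (forall k, 0 <= a k) ->
  forall m m', (m <= m')%nat -> sum_n a m <= sum_n a m'.
Proof.
  intros Ha m m' H. induction H. lra.
  rewrite sum_Sn. change (plus (sum_n a m0) (a (S m0))) with (sum_n a m0 + a (S m0)).
  specialize (Ha (S m0)). lra.
Qed.

Lemma ser_bound (a : nat -> R) B : (forall k, 0 <= a k) ->
  (forall m, sum_n a m <= B) -> ex_series a.
Proof.
  intros Ha HB.
  assert (H : ex_finite_lim_seq (sum_n a)).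
  { apply ex_finite_lim_seq_incr with B; auto.
    intros n. apply sum_n_mono; auto. }
  destruct H as [x Hx]. exists x. exact Hx.
Qed.

Lemma ser_psum_le (a : nat -> R) : (forall k, 0 <= a k) -> ex_series a ->
  exists B, forall m, sum_n a m <= B.
Proof.
  intros Ha [l Hl]. exists l. apply is_lim_seq_incr_compare.
  exact Hl. intros n. apply sum_n_mono; auto.
Qed.

Lemma ser_div2 (q : nat -> R) : (forall k, 0 <= q k) -> ex_series q ->
  ex_series (fun k => q (Nat.div2 k)).
Proof.
  intros Hq Hs. destruct (ser_psum_le q Hq Hs) as [B HB].
  assert (Hd : forall m, sum_n (fun k => q (Nat.div2 k)) (S (2 * m)) = 2 * sum_n q m).
  { induction m.
    - simpl. rewrite sum_Sn, !sum_O. simpl. change (plus (q 0%nat) (q 0%nat)) with (q 0%nat + q 0%nat). lra.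
    - replace (S (2 * S m)) with (S (S (S (2 * m)))) by lia.
      rewrite (sum_Sn _ (S (S (2 * m)))), (sum_Sn _ (S (2 * m))), IHm, sum_Sn.
      change (Nat.div2 (S (S (S (2 * m))))) with (S (Nat.div2 (S (2 * m)))).
      change (Nat.div2 (S (S (2 * m)))) with (S (Nat.div2 (2 * m))).
      rewrite Nat.div2_succ_double, Nat.div2_double.
      unfold plus; simpl. lra. }
  apply ser_bound with (2 * B). intros k; apply Hq.
  intros m. eapply Rle_trans. apply (sum_n_mono _ (fun k => Hq _) m (S (2 * m))). lia.
  rewrite Hd. specialize (HB m). lra.
Qed.
Lemma div2_bnd m : (2 * Nat.div2 m <= m /\ m <= 2 * Nat.div2 m + 1)%nat.
Proof. pose proof (Nat.div2_odd m). destruct (Nat.odd m); simpl in H; lia. Qed.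

Lemma d_SS x : Nat.div2 (S (S x)) = S (Nat.div2 x).
Proof. reflexivity. Qed.

Lemma ratio_mono a b c : 0 < a -> 0 < b -> 0 < c -> b ^ 2 <= a * c -> b / a <= c / b.
Proof.
  intros. replace (b / a) with (b ^ 2 * / (a * b)) by (field; lra).
  replace (c / b) with (a * c * / (a * b)) by (field; lra).
  apply Rmult_le_compat_r; [left; apply Rinv_0_lt_compat; nra|auto].
Qed.

Lemma LCprod (x y : nat -> R) k : 0 < x k -> 0 < y k -> 0 < x (S (S k)) -> 0 < y (S (S k)) ->
  x (S k) ^ 2 <= x k * x (S (S k)) -> y (S k) ^ 2 <= y k * y (S (S k)) ->
  (x (S k) * y (S k)) ^ 2 <= (x k * y k) * (x (S (S k)) * y (S (S k))).
Proof.
  intros. replace ((x (S k) * y (S k)) ^ 2) with (x (S k) ^ 2 * y (S k) ^ 2) by ring.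
  replace ((x k * y k) * (x (S (S k)) * y (S (S k)))) with ((x k * x (S (S k))) * (y k * y (S (S k)))) by ring.
  apply Rmult_le_compat; auto; apply pow2_ge_0.
Qed.

Lemma fact_lc k : INR (fact (S k)) ^ 2 <= INR (fact k) * INR (fact (S (S k))).
Proof.
  rewrite (fact_S_R (S k)), (fact_S_R k). pose proof (INR_fact_pos k).
  rewrite !S_INR. pose proof (pos_INR k). nra.
Qed.
Lemma part2 M N C : weight_seq M -> 1 <= C ->
  (forall j k, M (j + k)%nat <= C ^ (j + k) * M j * M k) -> in_LM M N ->
  exists N', in_LM M N' /\ Rbar_lt (mg N' N) p_infty.
Proof.
  intros HwM HC Hmg [HwN [HqN [HMN Hlc]]].
  pose proof (ws_pos _ HwM) as HMp. pose proof (ws_pos _ HwN) as HNp.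
  assert (HN01 : N 0%nat = 1 /\ 1 <= N 1%nat).
  { destruct HwN as [mu [H0 [Hp [Hi [HN0 [HS _]]]]]]. split; auto.
    rewrite HS, HN0. specialize (Hi 0%nat). lra. }
  destruct HN01 as [HN0 HN1].
  set (n := fun k => N k / INR (fact k)).
  assert (Hnp : forall k, 0 < n k).
  { intros k; unfold n; apply Rdiv_lt_0_compat; auto; apply INR_fact_pos. }
  assert (Hnlc : forall k, n (S k) ^ 2 <= n k * n (S (S k))) by exact Hlc.
  assert (HNn : forall k, N k = INR (fact k) * n k).
  { intros k; unfold n. pose proof (INR_fact_pos k). field. lra. }
  set (n' := fun m => C ^ m * n (Nat.div2 m) * n (Nat.div2 (S m))).
  set (N' := fun m => INR (fact m) * n' m).
  assert (HCp : 0 < C) by lra.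
  assert (Hn'p : forall k, 0 < n' k).
  { intros k; unfold n'. apply Rmult_lt_0_compat; [apply Rmult_lt_0_compat|]; auto. apply pow_lt; auto. }
  assert (HN'p : forall k, 0 < N' k).
  { intros k; unfold N'. apply Rmult_lt_0_compat; auto. apply INR_fact_pos. }
  assert (Hn'lc : forall k, n' (S k) ^ 2 <= n' k * n' (S (S k))).
  { intros k. destruct (Nat.Even_or_Odd k) as [[a Ha]|[a Ha]]; subst k.
    - unfold n'. rewrite !d_SS, Nat.div2_succ_double, Nat.div2_double.
      rewrite <- !tech_pow_Rmult. set (P := C ^ (2 * a)). right; ring.
    - replace (2 * a + 1)%nat with (S (2 * a)) by lia.
      unfold n'. rewrite !d_SS, !Nat.div2_succ_double, ?Nat.div2_double.
      rewrite <- !(tech_pow_Rmult C). set (P := C ^ (2 * a)).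
      assert (0 < P) by (apply pow_lt; auto).
      pose proof (Hnlc a). pose proof (Hnp a). pose proof (Hnp (S a)). pose proof (Hnp (S (S a))).
      replace ((C * (C * P) * n (S a) * n (S a)) ^ 2) with ((C^4 * P^2 * n (S a) ^ 2) * n (S a) ^ 2) by ring.
      replace (C * P * n a * n (S a) * (C * (C * (C * P)) * n (S a) * n (S (S a))))
        with ((C^4 * P^2 * n (S a) ^ 2) * (n a * n (S (S a)))) by ring.
      apply Rmult_le_compat_l; auto.
      apply Rmult_le_pos; [apply Rmult_le_pos|]; try apply pow_le; try apply pow2_ge_0; lra. }
  assert (HN'lc : forall k, N' (S k) ^ 2 <= N' k * N' (S (S k))).
  { intros k. unfold N'. apply (LCprod (fun k => INR (fact k)) n'); auto; try apply INR_fact_pos.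
    apply fact_lc. }
  assert (HN'0 : N' 0%nat = 1).
  { unfold N', n', n. simpl. rewrite HN0. field. }
  assert (HN'1 : N' 1%nat = C * N 1%nat).
  { unfold N', n', n. simpl. rewrite HN0. field. }
  assert (HMN' : forall m, M m <= N' m).
  { intros m. set (a := Nat.div2 m). set (b := Nat.div2 (S m)).
    assert (Hab : (a + b = m)%nat) by (unfold a, b; pose proof (div2_bnd m); pose proof (div2_bnd (S m)); lia).
    rewrite <- Hab at 1. eapply Rle_trans; [apply Hmg|]. rewrite Hab.
    unfold N', n'. fold a b.
    pose proof (pow_lt C m HCp).
    apply Rle_trans with (C ^ m * N a * N b).
    { rewrite !Rmult_assoc. apply Rmult_le_compat_l; [lra|].
      apply Rmult_le_compat; auto; left; auto. }
    rewrite (HNn a), (HNn b).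
    pose proof (fact_mul_le a b) as Hf. apply le_INR in Hf. rewrite mult_INR, Hab in Hf.
    pose proof (Hnp a). pose proof (Hnp b). pose proof (INR_fact_pos a). pose proof (INR_fact_pos b).
    replace (C ^ m * (INR (fact a) * n a) * (INR (fact b) * n b))
      with ((INR (fact a) * INR (fact b)) * (C ^ m * n a * n b)) by ring.
    apply Rmult_le_compat_r; auto.
    apply Rmult_le_pos; [apply Rmult_le_pos|]; lra. }
  exists N'. split.
  - split; [|split; [|split]].
    +
      exists (fun k => match k with 0%nat => 1 | S p => N' (S p) / N' p end).
      split; [reflexivity|]. split; [|split; [|split; [|split]]].
      * intros [|k]; [lra|]. apply Rdiv_lt_0_compat; auto.
      * intros [|k].
        -- rewrite HN'1, HN'0. nra.
        -- apply ratio_mono; auto.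
      * exact HN'0.
      * intros k. pose proof (HN'p k). field. lra.
      * destruct HwM as [mu [_ [_ [_ [_ [_ Hlim]]]]]].
        apply is_lim_seq_le_p_loc with (2 := Hlim).
        exists 0%nat. intros k _. apply Rle_Rpower_l.
        -- destruct k. simpl. rewrite Rinv_0. lra.
           left. apply Rinv_0_lt_compat, lt_0_INR. lia.
        -- split; auto.
    +
      set (q := fun i => N i / N (S i)).
      assert (Hq0 : forall i, 0 <= q i).
      { intros i; unfold q. left. apply Rdiv_lt_0_compat; auto. }
      destruct (ser_psum_le _ (fun k => Hq0 _) (ser_div2 q Hq0 HqN)) as [B HB].
      unfold nonquasianalytic.
      apply ser_bound with B.
      { intros k. left. apply Rdiv_lt_0_compat; auto. }
      intros m. eapply Rle_trans; [|apply (HB m)].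
      unfold sum_n. apply sum_n_m_le. intros k.
      set (a := Nat.div2 k).
      assert (Heq : N' k / N' (S k) = q a * (INR (S a) / (C * INR (S k)))).
      { unfold N', n', q, n. rewrite d_SS. fold a.
        rewrite (fact_S_R k), (fact_S_R a), <- tech_pow_Rmult.
        pose proof (INR_fact_pos k). pose proof (INR_fact_pos a).
        pose proof (pow_lt C k HCp). pose proof (HNp a). pose proof (HNp (S a)).
        pose proof (HNp (Nat.div2 (S k))). pose proof (INR_fact_pos (Nat.div2 (S k))).
        assert (0 < INR (S k)) by (apply lt_0_INR; lia).
        assert (0 < INR (S a)) by (apply lt_0_INR; lia).
        field. repeat split; lra. }
      rewrite Heq.
      assert (Hak : (a <= k)%nat) by (unfold a; pose proof (div2_bnd k); lia).
      assert (0 < INR (S k)) by (apply lt_0_INR; lia).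
      assert (INR (S a) <= INR (S k)) by (apply le_INR; lia).
      assert (Hf : INR (S a) / (C * INR (S k)) <= 1).
      { apply (Rmult_le_reg_r (C * INR (S k))); [nra|].
        unfold Rdiv. rewrite Rmult_assoc, Rinv_l by nra. nra. }
      pose proof (Hq0 a).
      assert (0 <= INR (S a) / (C * INR (S k))).
      { apply Rdiv_le_0_compat; [apply pos_INR|nra]. }
      nra.
    + exact HMN'.
    + red. cbv beta.
      assert (Heq : forall k, N' k / INR (fact k) = n' k).
      { intros k; unfold N'. pose proof (INR_fact_pos k). field. lra. }
      intros k. rewrite !Heq. apply Hn'lc.
  -
    assert (Hb1 : forall j k, (j <= k)%nat -> N' (j + k)%nat <= (2 * C) ^ (j + k) * (N j * N k)).
    { intros j k Hjk. set (m := (j + k)%nat).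
      set (a := Nat.div2 m). set (b := Nat.div2 (S m)).
      assert (Hab : (j <= a /\ b <= k /\ a <= b /\ a + b = m)%nat).
      { unfold a, b. pose proof (div2_bnd m). pose proof (div2_bnd (S m)). unfold m in *. lia. }
      pose proof (LCX n Hnp Hnlc (a - j) j b ltac:(lia)) as HX.
      replace (j + (a - j))%nat with a in HX by lia.
      replace (b + (a - j))%nat with k in HX by lia.
      pose proof (fact_binom_le m j ltac:(unfold m; lia)) as Hf.
      replace (m - j)%nat with k in Hf by (unfold m; lia).
      apply le_INR in Hf. rewrite !mult_INR, pow_INR in Hf. replace (INR 2) with 2 in Hf by (simpl; lra).
      unfold N', n'. fold a b.
      rewrite (HNn j), (HNn k), Rpow_mult_distr.
      pose proof (pow_lt C m HCp). pose proof (Hnp a). pose proof (Hnp b).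
      pose proof (INR_fact_pos j). pose proof (INR_fact_pos k).
      replace (2 ^ m * C ^ m * (INR (fact j) * n j * (INR (fact k) * n k)))
        with ((2 ^ m * INR (fact j) * INR (fact k)) * (C ^ m * (n j * n k))) by ring.
      replace (INR (fact m) * (C ^ m * n a * n b)) with (INR (fact m) * (C ^ m * (n a * n b))) by ring.
      apply Rmult_le_compat.
      - apply Rlt_le, INR_fact_pos.
      - apply Rmult_le_pos; [lra|]. apply Rmult_le_pos; lra.
      - exact Hf.
      - apply Rmult_le_compat_l; [lra|]. exact HX. }
    assert (Hb : forall j k, N' (j + k)%nat <= (2 * C) ^ (j + k) * (N j * N k)).
    { intros j k. destruct (Nat.le_ge_cases j k) as [h|h]; auto.
      rewrite Nat.add_comm, (Rmult_comm (N j)). apply Hb1; exact h. }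
    unfold mg.
    match goal with |- Rbar_lt (Lub_Rbar ?E) _ => destruct (Lub_Rbar_correct E) as [_ Hl];
      assert (Hub : is_ub_Rbar E (2 * C)) end.
    { intros x [j [k [Hjk ->]]]. simpl.
      set (m := (j + k)%nat).
      assert (Hm : 0 < INR m) by (apply lt_0_INR; unfold m; lia).
      pose proof (HNp j). pose proof (HNp k). pose proof (HN'p m).
      assert (Hr : N' m / (N j * N k) <= (2 * C) ^ m).
      { apply (Rmult_le_reg_r (N j * N k)); [nra|].
        unfold Rdiv. rewrite Rmult_assoc, Rinv_l by nra. rewrite Rmult_1_r. apply Hb. }
      eapply Rle_trans. apply Rle_Rpower_l; [left; apply Rinv_0_lt_compat; auto|].
      split; [apply Rdiv_lt_0_compat; nra|exact Hr].
      rewrite <- Rpower_pow by lra. rewrite Rpower_mult, Rinv_r by lra.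
      rewrite Rpower_1 by lra. lra. }
    specialize (Hl _ Hub).
    destruct (Lub_Rbar _); simpl in *; auto.
Qed.

Theorem lemma6p3 (M : nat -> R) :
  weight_seq M -> quasianalytic M -> intersectable M ->
  (forall N, in_LM M N ->
     is_lim_seq (fun k => Rpower (N k / INR (Factorial.fact k)) (/ INR k)) p_infty) /\
  (moderate_growth M ->
     forall N, in_LM M N ->
       exists N', in_LM M N' /\ Rbar_lt (mg N' N) p_infty).
Proof.
  intros HwM Hqa Hint. split.
  - intros N [HwN [HqN _]]. apply part1; auto.
  - intros [C [HC Hmg]] N HN. apply (part2 M N (Rmax C 1)); auto.
    + apply Rmax_r.
    + pose proof (ws_pos M HwM) as HMp.
      intros j k. eapply Rle_trans; [apply Hmg|].
      rewrite !Rmult_assoc. apply Rmult_le_compat_r.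
      * pose proof (HMp j); pose proof (HMp k); nra.
      * apply pow_incr. split; [lra|apply Rmax_l].
Qed.
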